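(* Let $n\ge 3$ and let $a_k,b_k\in\mathbb{R}$ with $a_k^2+b_k^2\ne 0$ for $k=1,\dots,n$, defining lines $l^k:=\{(x,y):a_kx+b_ky-1=0\}$. Assume $$a_ib_{i^\oplus}-b_ia_{i^\oplus}>0\quad\text{for all } i\in\{1,\dots,n\}$$ (so the intersection points $V_{ii^\oplus}:=l^i\cap l^{i^\oplus}$ exist), and $$-a_k(b_i-b_j)+b_k(a_i-a_j)-(a_ib_j-b_ia_j)<0\quad\text{for all } i\in\{1,\dots,n\},\ j=i^{\oplus},\ k\in\{1,\dots,n\}\setminus\{i,j\}.$$ Let $S:=\{(x,y)\in\mathbb{R}^2: a_kx+b_ky-1\le 0 \text{ for all } k=1,\dots,n\}$. Then the boundary of $S$ is an enclosed, non-degenerate, $n$-sided convex polygon containing the origin $(0,0)$ in its interior; namely, it is the closed polygon formed by the sequence of points $(V_{12},V_{23},\dots,V_{(n-1)n},V_{n1},V_{12})$, whose $n$ vertices $V_{12},\dots,V_{n1}$ are pairwise distinct, with no three cyclically consecutive vertices collinear, and whose edge $[V_{k^\ominus k},V_{kk^\oplus}]$ lies on $l^k$ for each $k$.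
   Context: For $i\in\{1,\dots,n\}$, $i^{\oplus}:=i+1$ if $i\le n-1$ and $n^{\oplus}:=1$; $i^{\ominus}$ is defined by $j=i^{\ominus}$ iff $j^{\oplus}=i$. For lines $l^i,l^j$ with $D_{ij}:=a_ib_j-b_ia_j\ne0$, $l^i\cap l^j$ is the single point $\left(-\frac{b_i-b_j}{D_{ij}},\frac{a_i-a_j}{D_{ij}}\right)$. *)

(* Defs.v *)
From HB Require Import structures.
From mathcomp Require Import all_boot all_order all_algebra.
From mathcomp Require Import all_classical all_reals topology normedtype.
Set Implicit Arguments. Unset Strict Implicit. Unset Printing Implicit Defensive.
Import Order.TTheory GRing.Theory Num.Theory.
Import numFieldTopology.Exports numFieldNormedType.Exports.
Local Open Scope ring_scope.
Local Open Scope classical_set_scope.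

(* Indices 1..n of the paper are 'I_n = {0,..,n-1}; i^(+) = ordS i, i^(-) = ord_pred i. *)
Section Defs.
Context {R : realType} {n : nat}.
Variables (a b : 'I_n -> R).

Definition Dab (i j : 'I_n) : R := a i * b j - b i * a j.

(* l^i cap l^j (when D_ij <> 0) *)
Definition Vx (i j : 'I_n) : R * R :=
  (- (b i - b j) / Dab i j, (a i - a j) / Dab i j).

Definition line (k : 'I_n) : set (R * R) :=
  [set p | a k * p.1 + b k * p.2 - 1 = 0].

Definition Sreg : set (R * R) :=
  [set p | forall k, a k * p.1 + b k * p.2 - 1 <= 0].
End Defs.

Definition segment {R : realType} (p q : R * R) : set (R * R) :=
  [set r | exists t : R, 0 <= t <= 1 /\
     r = ((1 - t) * p.1 + t * q.1, (1 - t) * p.2 + t * q.2)].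

Definition collinear {R : realType} (p q r : R * R) : Prop :=
  (q.1 - p.1) * (r.2 - p.2) - (q.2 - p.2) * (r.1 - p.1) = 0.

Definition hull {R : realType} {n : nat} (v : 'I_n -> R * R) : set (R * R) :=
  [set r | exists w : 'I_n -> R, (forall i, 0 <= w i) /\ \sum_(i < n) w i = 1 /\
     r = (\sum_(i < n) w i * (v i).1, \sum_(i < n) w i * (v i).2)].

(* Main.v *)
Require Import Defs.
From HB Require Import structures.
From mathcomp Require Import all_boot all_order all_algebra.
From mathcomp Require Import all_classical all_reals topology normedtype.
From mathcomp Require Import ring lra zify.
Import Order.TTheory GRing.Theory Num.Theory.
Import numFieldTopology.Exports numFieldNormedType.Exports.
Local Open Scope ring_scope.
Local Open Scope classical_set_scope.
Set Implicit Arguments. Unset Strict Implicit. Unset Printing Implicit Defensive.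

Lemma val_iter_ordS (n : nat) (i : 'I_n) (k : nat) :
  val (iter k (@ordS n) i) = ((i + k) %% n)%N.
Proof.
elim: k => [|k IH] /=; first by rewrite addn0 modn_small.
by rewrite IH -addn1 modnDml addn1 addnS.
Qed.

Lemma iter_ordS_neq (n : nat) (i : 'I_n) (k : nat) :
  (0 < k < n)%N -> iter k (@ordS n) i != i.
Proof.
move=> /andP [k0 kn]; apply/eqP => /(congr1 val); rewrite val_iter_ordS.
move=> h.
have : ((i + k) %% n == (i + 0) %% n)%N by rewrite h addn0 modn_small.
rewrite eqn_modDl mod0n modn_small //.
by move/eqP => hk; move: k0; rewrite hk.
Qed.

Lemma iter_ordS_n (n : nat) (i : 'I_n) : iter n (@ordS n) i = i.
Proof. by apply: val_inj; rewrite val_iter_ordS modnDr modn_small. Qed.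

Lemma iter_ordS_reach (n : nat) (i j : 'I_n) : exists k, iter k (@ordS n) i = j.
Proof.
exists (j + (n - i))%N; apply: val_inj; rewrite val_iter_ordS.
rewrite addnCA subnKC; last exact: ltnW.
by rewrite modnDr modn_small.
Qed.

Lemma ordS_neq (n : nat) (i : 'I_n) : (3 <= n)%N -> ordS i != i.
Proof. move=> hn; apply: (@iter_ordS_neq n i 1); lia. Qed.

Lemma ordSS_neq (n : nat) (i : 'I_n) : (3 <= n)%N -> ordS (ordS i) != i.
Proof. move=> hn; apply: (@iter_ordS_neq n i 2); lia. Qed.

Definition cr {R : realType} (p q : R * R) : R := p.1 * q.2 - p.2 * q.1.
Definition dot {R : realType} (p q : R * R) : R := p.1 * q.1 + p.2 * q.2.
Definition fv {R : realType} {n : nat} (a b : 'I_n -> R) (k : 'I_n) (p : R * R) : R :=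
  a k * p.1 + b k * p.2 - 1.

Lemma Vx_on1 (R : realType) n (a b : 'I_n -> R) i j :
  Dab a b i j != 0 -> fv a b i (Vx a b i j) = 0.
Proof. rewrite /fv /Vx /Dab /= => hD. field. exact: hD. Qed.

Lemma Vx_on2 (R : realType) n (a b : 'I_n -> R) i j :
  Dab a b i j != 0 -> fv a b j (Vx a b i j) = 0.
Proof. rewrite /fv /Vx /Dab /= => hD. field. exact: hD. Qed.

Lemma Vx_neg (R : realType) n (a b : 'I_n -> R) i j k :
  0 < Dab a b i j ->
  - a k * (b i - b j) + b k * (a i - a j) - Dab a b i j < 0 ->
  fv a b k (Vx a b i j) < 0.
Proof.
move=> hD hk.
have -> : fv a b k (Vx a b i j) = (- a k * (b i - b j) + b k * (a i - a j) - Dab a b i j) / Dab a b i j.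
  rewrite /fv /Vx /=; field; exact: lt0r_neq0.
by rewrite ltr_pdivrMr // mul0r.
Qed.

Lemma cr_pos_alg (R : realType) (x1 y1 x2 y2 x3 y3 : R) :
  0 < x1 * y2 - y1 * x2 -> 0 < x2 * y3 - y2 * x3 ->
  - x1 * (y2 - y3) + y1 * (x2 - x3) - (x2 * y3 - y2 * x3) < 0 ->
  0 < (- (y1 - y2) / (x1 * y2 - y1 * x2)) * ((x2 - x3) / (x2 * y3 - y2 * x3))
      - ((x1 - x2) / (x1 * y2 - y1 * x2)) * (- (y2 - y3) / (x2 * y3 - y2 * x3)).
Proof.
move=> h1 h2 h3.
have -> : (- (y1 - y2) / (x1 * y2 - y1 * x2)) * ((x2 - x3) / (x2 * y3 - y2 * x3))
      - ((x1 - x2) / (x1 * y2 - y1 * x2)) * (- (y2 - y3) / (x2 * y3 - y2 * x3))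
   = (- (- x1 * (y2 - y3) + y1 * (x2 - x3) - (x2 * y3 - y2 * x3)))
      / ((x1 * y2 - y1 * x2) * (x2 * y3 - y2 * x3)).
  by field; apply/andP; split; apply: lt0r_neq0.
apply: divr_gt0; first lra.
exact: mulr_gt0.
Qed.

Lemma cr_trans (R : realType) (u v w z : R * R) :
  0 < dot u v -> 0 < dot u w -> 0 < dot u z -> 0 < cr v w -> 0 < cr w z -> 0 < cr v z.
Proof.
move=> hv hw hz h1 h2.
have e : cr v z * dot u w = cr v w * dot u z + cr w z * dot u v.
  by rewrite /cr /dot; ring.
have : 0 < cr v z * dot u w by rewrite e; apply: addr_gt0; apply: mulr_gt0.
by rewrite pmulr_lgt0.
Qed.

Lemma col_alg (R : realType) (a b p1 p2 q1 q2 r1 r2 : R) :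
  a * q1 + b * q2 - 1 = 0 -> a * r1 + b * r2 - 1 = 0 -> (q1, q2) <> (r1, r2) ->
  a * p1 + b * p2 - 1 < 0 -> (q1 - p1) * (r2 - p2) - (q2 - p2) * (r1 - p1) <> 0.
Proof.
move=> hq hr hqr hp hc.
have e2 : (r2 - q2) * (a * p1 + b * p2 - 1) =
   (r2 - q2) * (a * q1 + b * q2 - 1) - (q2 - p2) * ((a * r1 + b * r2 - 1) - (a * q1 + b * q2 - 1))
   - a * ((q1 - p1) * (r2 - p2) - (q2 - p2) * (r1 - p1)) by ring.
have e1 : (r1 - q1) * (a * p1 + b * p2 - 1) =
   b * ((q1 - p1) * (r2 - p2) - (q2 - p2) * (r1 - p1))
   - (q1 - p1) * ((a * r1 + b * r2 - 1) - (a * q1 + b * q2 - 1)) + (r1 - q1) * (a * q1 + b * q2 - 1) by ring.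
rewrite hq hr hc in e1 e2.
have fp : a * p1 + b * p2 - 1 != 0 by apply: ltr0_neq0.
move: e1 e2; rewrite ?mulr0 ?subrr ?mul0r ?subr0 ?add0r ?addr0 ?sub0r ?oppr0 ?mulr0 ?subrr ?subr0 ?oppr0.

move=> /eqP; rewrite mulf_eq0 (negbTE fp) orbF subr_eq0 => /eqP e1.
move=> /eqP; rewrite mulf_eq0 (negbTE fp) orbF subr_eq0 => /eqP e2.
by apply: hqr; rewrite e1 e2.
Qed.

Lemma edge_alg (R : realType) (ak bk am bm al bl : R) (v w p : R * R) :
 ak ^+ 2 + bk ^+ 2 != 0 -> v <> w ->
 ak * v.1 + bk * v.2 - 1 = 0 -> ak * w.1 + bk * w.2 - 1 = 0 -> ak * p.1 + bk * p.2 - 1 = 0 ->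
 am * v.1 + bm * v.2 - 1 = 0 -> am * w.1 + bm * w.2 - 1 < 0 -> am * p.1 + bm * p.2 - 1 <= 0 ->
 al * w.1 + bl * w.2 - 1 = 0 -> al * v.1 + bl * v.2 - 1 < 0 -> al * p.1 + bl * p.2 - 1 <= 0 ->
 exists t : R, 0 <= t <= 1 /\ p = ((1 - t) * v.1 + t * w.1, (1 - t) * v.2 + t * w.2).
Proof.
case: v w p => v1 v2 [w1 w2] [p1 p2] /= hg hvw hv hw hp hmv hmw hmp hlw hlv hlp.
have hN : (w1 - v1) ^+ 2 + (w2 - v2) ^+ 2 != 0.
  apply/negP; rewrite paddr_eq0 ?sqr_ge0 // !sqrf_eq0 !subr_eq0 => /andP [/eqP e1 /eqP e2].
  by apply: hvw; rewrite e1 e2.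
have hak : ak * ((p1 - v1) * (w2 - v2) - (p2 - v2) * (w1 - v1)) = 0.
  have -> : ak * ((p1 - v1) * (w2 - v2) - (p2 - v2) * (w1 - v1)) =
    (w2 - v2) * ((ak * p1 + bk * p2 - 1) - (ak * v1 + bk * v2 - 1))
    - (p2 - v2) * ((ak * w1 + bk * w2 - 1) - (ak * v1 + bk * v2 - 1)) by ring.
  by rewrite hp hv hw subrr !mulr0 subrr.
have hbk : bk * ((p1 - v1) * (w2 - v2) - (p2 - v2) * (w1 - v1)) = 0.
  have -> : bk * ((p1 - v1) * (w2 - v2) - (p2 - v2) * (w1 - v1)) =
    (p1 - v1) * ((ak * w1 + bk * w2 - 1) - (ak * v1 + bk * v2 - 1))
    - (w1 - v1) * ((ak * p1 + bk * p2 - 1) - (ak * v1 + bk * v2 - 1)) by ring.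
  by rewrite hp hv hw subrr !mulr0 subrr.
have hc : (p1 - v1) * (w2 - v2) - (p2 - v2) * (w1 - v1) = 0.
  have : (ak ^+ 2 + bk ^+ 2) * ((p1 - v1) * (w2 - v2) - (p2 - v2) * (w1 - v1)) = 0.
    have -> : (ak ^+ 2 + bk ^+ 2) * ((p1 - v1) * (w2 - v2) - (p2 - v2) * (w1 - v1)) =
      ak * (ak * ((p1 - v1) * (w2 - v2) - (p2 - v2) * (w1 - v1)))
      + bk * (bk * ((p1 - v1) * (w2 - v2) - (p2 - v2) * (w1 - v1))) by ring.
    by rewrite hak hbk !mulr0 addr0.
  by move/eqP; rewrite mulf_eq0 (negbTE hg) /= => /eqP.
set t := ((p1 - v1) * (w1 - v1) + (p2 - v2) * (w2 - v2)) / ((w1 - v1) ^+ 2 + (w2 - v2) ^+ 2).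
have hp1 : p1 = (1 - t) * v1 + t * w1.
  have : (p1 - (1 - t) * v1 - t * w1) * ((w1 - v1) ^+ 2 + (w2 - v2) ^+ 2) =
     (w2 - v2) * ((p1 - v1) * (w2 - v2) - (p2 - v2) * (w1 - v1)).
    rewrite /t; field; exact: hN.
  rewrite hc mulr0.
  by move/eqP; rewrite mulf_eq0 (negbTE hN) orbF => /eqP h; lra.
have hp2 : p2 = (1 - t) * v2 + t * w2.
  have : (p2 - (1 - t) * v2 - t * w2) * ((w1 - v1) ^+ 2 + (w2 - v2) ^+ 2) =
     - (w1 - v1) * ((p1 - v1) * (w2 - v2) - (p2 - v2) * (w1 - v1)).
    rewrite /t; field; exact: hN.
  by rewrite hc mulr0 => /eqP; rewrite mulf_eq0 (negbTE hN) orbF => /eqP h; lra.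
exists t; split; last by rewrite -hp1 -hp2.
have em : am * p1 + bm * p2 - 1 = (1 - t) * (am * v1 + bm * v2 - 1) + t * (am * w1 + bm * w2 - 1).
  by rewrite hp1 hp2; ring.
have el : al * p1 + bl * p2 - 1 = (1 - t) * (al * v1 + bl * v2 - 1) + t * (al * w1 + bl * w2 - 1).
  by rewrite hp1 hp2; ring.
rewrite hmv mulr0 add0r in em; rewrite hlw mulr0 addr0 in el.
rewrite em in hmp; rewrite el in hlp.
apply/andP; split; nra.
Qed.

Definition VV {R : realType} {n : nat} (a b : 'I_n -> R) (i : 'I_n) : R * R :=
  Vx a b i (ordS i).

Definition HK {R : realType} {n : nat} (a b : 'I_n -> R) : Prop :=
  forall i k, k != i -> k != ordS i ->
     - a k * (b i - b (ordS i)) + b k * (a i - a (ordS i)) - Dab a b i (ordS i) < 0.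

Lemma V_on1 (R : realType) n (a b : 'I_n -> R) (hD : forall i, 0 < Dab a b i (ordS i)) i :
  fv a b i (VV a b i) = 0.
Proof. by apply: Vx_on1; apply: lt0r_neq0. Qed.

Lemma V_on2 (R : realType) n (a b : 'I_n -> R) (hD : forall i, 0 < Dab a b i (ordS i)) i :
  fv a b (ordS i) (VV a b i) = 0.
Proof. by apply: Vx_on2; apply: lt0r_neq0. Qed.

Lemma V_neg (R : realType) n (a b : 'I_n -> R) (hD : forall i, 0 < Dab a b i (ordS i))
  (hk : HK a b) i k : k != i -> k != ordS i -> fv a b k (VV a b i) < 0.
Proof. by move=> h1 h2; apply: Vx_neg => //; apply: hk. Qed.

Lemma V_le (R : realType) n (a b : 'I_n -> R) (hD : forall i, 0 < Dab a b i (ordS i))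
  (hk : HK a b) i k : fv a b k (VV a b i) <= 0.
Proof.
have [->|h1] := eqVneq k i; first by rewrite V_on1.
have [->|h2] := eqVneq k (ordS i); first by rewrite V_on2.
by apply: ltW; apply: V_neg.
Qed.

Lemma V_cr (R : realType) n (a b : 'I_n -> R) (hn : (3 <= n)%N)
  (hD : forall i, 0 < Dab a b i (ordS i)) (hk : HK a b) i :
  0 < cr (VV a b i) (VV a b (ordS i)).
Proof.
have h1 : i != ordS i by rewrite eq_sym; apply: ordS_neq.
have h2 : i != ordS (ordS i) by rewrite eq_sym; apply: ordSS_neq.
have := hk (ordS i) i h1 h2.
have := hD i; have := hD (ordS i).
rewrite /cr /VV /Vx /Dab /= => d2 d1 h.
exact: cr_pos_alg.
Qed.

Lemma no_halfplane (R : realType) n (a b : 'I_n -> R) (hn : (3 <= n)%N)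
  (hD : forall i, 0 < Dab a b i (ordS i)) (hk : HK a b) (u : R * R) :
  ~ (forall i, 0 < dot u (VV a b i)).
Proof.
move=> hu.
have n0 : (0 < n)%N by lia.
pose i0 := Ordinal n0.
have key : forall k, 0 < cr (VV a b i0) (VV a b (iter k.+1 (@ordS n) i0)).
  elim => [|k IH]; first exact: V_cr.
  apply: (cr_trans (hu i0) (hu (iter k.+1 (@ordS n) i0)) (hu (iter k.+2 (@ordS n) i0)) IH).
  exact: V_cr.
have := key n.-1; rewrite prednK; last by lia.
by rewrite iter_ordS_n /cr mulrC subrr ltxx.
Qed.

Lemma sector (R : realType) n (a b : 'I_n -> R) (hn : (3 <= n)%N)
  (hD : forall i, 0 < Dab a b i (ordS i)) (hk : HK a b) (p : R * R) :
  exists i, 0 <= cr (VV a b i) p /\ cr (VV a b (ordS i)) p <= 0.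
Proof.
have exj : exists j, 0 <= cr (VV a b j) p.
  case: (pselect (exists j, 0 <= cr (VV a b j) p)) => // hno; exfalso.
  apply: (no_halfplane hn hD hk (u := (- p.2, p.1))) => i.
  have : ~ (0 <= cr (VV a b i) p) by move=> h; apply: hno; exists i.
  move/negP; rewrite -ltNge /cr /dot /= => h; lra.
have exi : exists i, cr (VV a b i) p <= 0.
  case: (pselect (exists j, cr (VV a b j) p <= 0)) => // hno; exfalso.
  apply: (no_halfplane hn hD hk (u := (p.2, - p.1))) => i.
  have : ~ (cr (VV a b i) p <= 0) by move=> h; apply: hno; exists i.
  move/negP; rewrite -ltNge /cr /dot /= => h; lra.
case: (pselect (exists i, 0 <= cr (VV a b i) p /\ cr (VV a b (ordS i)) p <= 0)) => // hno.
exfalso.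
have step : forall i, 0 <= cr (VV a b i) p -> 0 < cr (VV a b (ordS i)) p.
  by move=> i hi; rewrite ltNge; apply/negP => h; apply: hno; exists i; split.
case: exj => j hj.
have hall : forall k, 0 <= cr (VV a b (iter k (@ordS n) j)) p.
  by elim => // k IH; apply: ltW; apply: step.
case: exi => i hi.
have [k hk'] := iter_ordS_reach j (ord_pred i).
have := step _ (hall k); rewrite hk' ord_predK => h; lra.
Qed.

Lemma sum_ind (R : realType) n (F : 'I_n -> R) (i : 'I_n) :
  \sum_(j < n) (if j == i then 1 else 0) * F j = F i.
Proof.
rewrite (bigD1 i) //= eqxx mul1r big1 ?addr0 // => j /negbTE ->; by rewrite mul0r.
Qed.

Lemma sum_ind1 (R : realType) n (i : 'I_n) :
  \sum_(j < n) (if j == i then 1 else 0) = 1 :> R.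
Proof.
rewrite (bigD1 i) //= eqxx big1 ?addr0 // => j /negbTE ->; by [].
Qed.

Lemma hull_pt (R : realType) n (v : 'I_n -> R * R) i : hull v (v i).
Proof.
exists (fun j => if j == i then 1 else 0); split.
  by move=> j; case: ifP => _ //; apply: ler01.
split; first exact: sum_ind1.
by rewrite !sum_ind; case: (v i).
Qed.

Lemma sum3 (R : realType) n (F G H X : 'I_n -> R) (c0 c1 c2 : R) :
  \sum_(j < n) (c0 * F j + c1 * G j + c2 * H j) * X j =
  c0 * (\sum_(j < n) F j * X j) + c1 * (\sum_(j < n) G j * X j) + c2 * (\sum_(j < n) H j * X j).
Proof.
rewrite !mulr_sumr -!big_split /=; apply: eq_bigr => j _; ring.
Qed.

Lemma hull3 (R : realType) n (v : 'I_n -> R * R) (c0 c1 c2 : R) (x y z : R * R) :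
  0 <= c0 -> 0 <= c1 -> 0 <= c2 -> c0 + c1 + c2 = 1 ->
  hull v x -> hull v y -> hull v z ->
  hull v (c0 * x.1 + c1 * y.1 + c2 * z.1, c0 * x.2 + c1 * y.2 + c2 * z.2).
Proof.
move=> h0 h1 h2 hs [w0 [w0p [w0s ->]]] [w1 [w1p [w1s ->]]] [w2 [w2p [w2s ->]]] /=.
exists (fun j => c0 * w0 j + c1 * w1 j + c2 * w2 j); split.
  by move=> j; apply: addr_ge0; [apply: addr_ge0|]; apply: mulr_ge0.
split; last by rewrite !sum3.
by rewrite !big_split /= -!mulr_sumr w0s w1s w2s !mulr1.
Qed.

Lemma decomp_ex (R : realType) (v w p : R * R) :
  0 < cr v w -> 0 <= cr v p -> cr w p <= 0 ->
  exists al be : R, 0 <= al /\ 0 <= be /\ p = (al * v.1 + be * w.1, al * v.2 + be * w.2).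
Proof.
move=> hc h1 h2.
exists (- cr w p / cr v w), (cr v p / cr v w); split.
  by apply: divr_ge0; [lra | apply: ltW].
split; first by apply: divr_ge0 => //; apply: ltW.
have hc0 : cr v w != 0 by apply: lt0r_neq0.
move: hc0; case: v w p {hc h1 h2} => v1 v2 [w1 w2] [p1 p2]; rewrite /cr /= => hc0.
by congr (_, _); field.
Qed.

Lemma hull_sub_S (R : realType) n (a b : 'I_n -> R)
  (hD : forall i, 0 < Dab a b i (ordS i)) (hk : HK a b) (p : R * R) :
  hull (VV a b) p -> forall k, fv a b k p <= 0.
Proof.
move=> [w [wp [ws ->]]] k.
have -> : fv a b k (\sum_(i < n) w i * (VV a b i).1, \sum_(i < n) w i * (VV a b i).2)
   = \sum_(j < n) w j * fv a b k (VV a b j).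
  rewrite [RHS](eq_bigr (fun j => a k * (w j * (VV a b j).1) + b k * (w j * (VV a b j).2) - w j));
    last by move=> j _; rewrite /fv; ring.
  by rewrite sumrB big_split /= -!mulr_sumr ws.
rewrite -oppr_ge0 -sumrN; apply: sumr_ge0 => j _.
by rewrite -mulrN; apply: mulr_ge0 => //; rewrite oppr_ge0; apply: V_le.
Qed.

Lemma zero_in_hull (R : realType) n (a b : 'I_n -> R) (hn : (3 <= n)%N)
  (hD : forall i, 0 < Dab a b i (ordS i)) (hk : HK a b) :
  hull (VV a b) (0, 0).
Proof.
have n0 : (0 < n)%N by lia.
pose i0 := Ordinal n0.
have [i [h1 h2]] := sector hn hD hk (- (VV a b i0).1, - (VV a b i0).2).
have [al [be [hal [hbe he]]]] := decomp_ex (V_cr hn hD hk i) h1 h2.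
have hs : 0 < 1 + al + be by lra.
have := @hull3 _ _ _ (1 / (1 + al + be)) (al / (1 + al + be)) (be / (1 + al + be)) _ _ _
   _ _ _ _ (hull_pt (VV a b) i0) (hull_pt (VV a b) i) (hull_pt (VV a b) (ordS i)).
have e1 := congr1 fst he; have e2 := congr1 snd he; move: e1 e2 => /= e1 e2.
have -> : (1 / (1 + al + be) * (VV a b i0).1 + al / (1 + al + be) * (VV a b i).1 +
            be / (1 + al + be) * (VV a b (ordS i)).1) =
          ((VV a b i0).1 + (al * (VV a b i).1 + be * (VV a b (ordS i)).1)) / (1 + al + be).
  by field; apply: lt0r_neq0.
have -> : (1 / (1 + al + be) * (VV a b i0).2 + al / (1 + al + be) * (VV a b i).2 +
            be / (1 + al + be) * (VV a b (ordS i)).2) =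
          ((VV a b i0).2 + (al * (VV a b i).2 + be * (VV a b (ordS i)).2)) / (1 + al + be).
  by field; apply: lt0r_neq0.
rewrite -e1 -e2 !subrr !mul0r; apply.
- by apply: divr_ge0; lra.
- by apply: divr_ge0; lra.
- by apply: divr_ge0; lra.
- by field; apply: lt0r_neq0.
Qed.

Lemma S_sub_hull (R : realType) n (a b : 'I_n -> R) (hn : (3 <= n)%N)
  (hD : forall i, 0 < Dab a b i (ordS i)) (hk : HK a b) (p : R * R) :
  (forall k, fv a b k p <= 0) -> hull (VV a b) p.
Proof.
move=> hp.
have [i [h1 h2]] := sector hn hD hk p.
have [al [be [hal [hbe he]]]] := decomp_ex (V_cr hn hD hk i) h1 h2.
have hsum : al + be <= 1.
  have := hp (ordS i).
  have o1 := V_on2 hD i; have o2 := V_on1 hD (ordS i).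
  rewrite he /fv /= in o1 o2 *.
  have -> : a (ordS i) * (al * (VV a b i).1 + be * (VV a b (ordS i)).1) +
     b (ordS i) * (al * (VV a b i).2 + be * (VV a b (ordS i)).2) - 1 =
     al * (a (ordS i) * (VV a b i).1 + b (ordS i) * (VV a b i).2 - 1) +
     be * (a (ordS i) * (VV a b (ordS i)).1 + b (ordS i) * (VV a b (ordS i)).2 - 1) + al + be - 1 by ring.
  rewrite o1 o2 !mulr0 !add0r; lra.
have := @hull3 _ _ _ al be (1 - al - be) _ _ _ hal hbe _ _ (hull_pt (VV a b) i) (hull_pt (VV a b) (ordS i))
   (zero_in_hull hn hD hk).
rewrite he /= !mulr0 !addr0; apply; lra.
Qed.
Lemma fcont (R: realType) (a b : R) : continuous (fun p : R*R => a * p.1 + b * p.2 - 1).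
Proof.
move=> p.
apply: cvgB; last exact: cvg_cst.
apply: cvgD; apply: cvgM; try exact: cvg_cst.
  exact: cvg_fst.
exact: cvg_snd.
Qed.

Lemma open_halfplane (R: realType) (a b : R) :
  open [set p : R*R | a * p.1 + b * p.2 - 1 < 0].
Proof.
apply: (@open_comp _ _ (fun p : R*R => a * p.1 + b * p.2 - 1) [set x | x < 0]).
  by move=> q _; apply: fcont.
exact: open_lt.
Qed.

Lemma closed_halfplane (R: realType) (a b : R) :
  closed [set p : R*R | a * p.1 + b * p.2 - 1 <= 0].
Proof.
apply: (@preimage_closed _ _ (fun p : R*R => a * p.1 + b * p.2 - 1) [set x | x <= 0]).
  by move=> q _; apply: fcont.
exact: closed_le.
Qed.

Lemma inter_strict (R: realType) (n : nat) (a b : 'I_n -> R) (A : set (R*R)) (p : R*R) :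
  (forall q, (forall k, a k * q.1 + b k * q.2 - 1 < 0) -> A q) ->
  (forall k, a k * p.1 + b k * p.2 - 1 < 0) -> interior A p.
Proof.
move=> hA hp.
have H : \forall q \near p, forall k, [set q : R*R | a k * q.1 + b k * q.2 - 1 < 0] q.
  apply: (@filter_forall (R*R) _ (fun k => [set q : R*R | a k * q.1 + b k * q.2 - 1 < 0]) (nbhs p)) => k.
  apply: open_nbhs_nbhs; split; first exact: open_halfplane.
  exact: hp.
rewrite /interior /=.
apply: filterS H => q; exact: hA.
Qed.
Lemma interior_push (R: realType) (A : set (R*R)) (p : R*R) (a b : R) :
  interior A p -> exists t : R, 0 < t /\ A (p.1 + t * a, p.2 + t * b).
Proof.
move=> /nbhs_ballP [e /= e0 he].
have hc : 0 < 2 * (`|a| + `|b| + 1).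
  have := normr_ge0 a; have := normr_ge0 b; lra.
set t := e / (2 * (`|a| + `|b| + 1)).
have t0 : 0 < t by rewrite divr_gt0.
have key : forall c : R, `|c| <= `|a| + `|b| + 1 -> `|t * c| < e.
  move=> c hc'; rewrite normrM (gtr0_norm t0) /t.
  rewrite mulrAC ltr_pdivrMr // .
  have := normr_ge0 c; have h1 : 0 <= e * (`|a| + `|b| + 1 - `|c|) by apply: mulr_ge0; lra.
  nra.
exists t; split => //; apply: he.
rewrite /ball /=; split; rewrite /ball /=.
  rewrite opprD addrA subrr add0r normrN; apply: key.
  have := normr_ge0 b; lra.
rewrite opprD addrA subrr add0r normrN; apply: key.
have := normr_ge0 a; lra.
Qed.

Lemma closure_S (R : realType) n (a b : 'I_n -> R) : closure (Sreg a b) = Sreg a b.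
Proof.
have hc : closed (Sreg a b).
  rewrite (_ : Sreg a b = \bigcap_(k in setT) [set p : R * R | a k * p.1 + b k * p.2 - 1 <= 0]).
    by apply: closed_bigI => k _; apply: closed_halfplane.
  by apply/seteqP; split => p /= hp k; [move=> _; exact: hp | apply: hp].
by move/closure_id: hc => <-.
Qed.

Lemma interior_S (R : realType) n (a b : 'I_n -> R)
  (hab : forall k, a k ^+ 2 + b k ^+ 2 != 0) :
  interior (Sreg a b) = [set p | forall k, fv a b k p < 0].
Proof.
apply/seteqP; split => p /=.
  move=> hp k.
  have hS := interior_subset hp k.
  rewrite lt_neqAle; apply/andP; split => //; apply/eqP => e.
  have [t [t0 ht]] := interior_push (a k) (b k) hp.
  have := ht k; rewrite /=.
  have -> : a k * (p.1 + t * a k) + b k * (p.2 + t * b k) - 1 =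
            fv a b k p + t * (a k ^+ 2 + b k ^+ 2) by rewrite /fv; ring.
  rewrite e add0r.
  have hg : 0 < a k ^+ 2 + b k ^+ 2.
    by rewrite lt_neqAle eq_sym hab /=; apply: addr_ge0; apply: sqr_ge0.
  have := mulr_gt0 t0 hg; lra.
move=> hp; apply: (@inter_strict R n a b) => // q hq k; exact: ltW.
Qed.
Unset Implicit Arguments.

Theorem theorem1 (R : realType) (n : nat) (a b : 'I_n -> R)
  (hn : (3 <= n)%N)
  (hab : forall k, a k ^+ 2 + b k ^+ 2 != 0)
  (hD : forall i, 0 < Dab a b i (ordS i))
  (hk : forall i k, k != i -> k != ordS i ->
     - a k * (b i - b (ordS i)) + b k * (a i - a (ordS i)) - Dab a b i (ordS i) < 0) :
  let V := fun i : 'I_n => Vx a b i (ordS i) in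
  let S := Sreg a b in
  (* vertices pairwise distinct *)
  (forall i j : 'I_n, i != j -> V i <> V j) /\
  (* no three cyclically consecutive vertices collinear *)
  (forall i : 'I_n, ~ collinear (V i) (V (ordS i)) (V (ordS (ordS i)))) /\
  (* edge [V_{k- k}, V_{k k+}] lies on l^k *)
  (forall k : 'I_n, segment (V (ord_pred k)) (V k) `<=` line a b k) /\
  (* the boundary of S is the closed polygon V_12, ..., V_n1, V_12 *)
  (closure S `\` interior S = [set p | exists k : 'I_n, segment (V (ord_pred k)) (V k) p]) /\
  (* S is the (convex, bounded) region enclosed: the convex hull of the vertices *)
  (S = hull V) /\
  (* the origin is an interior point *)
  interior S (0, 0).
Proof.
move=> V S.
have eV : V = VV a b by [].
have hk' : HK a b by [].
rewrite /S eV {V eV S}.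
have nS : forall i : 'I_n, ordS i != i by move=> i; apply: ordS_neq.
have nSS : forall i : 'I_n, ordS (ordS i) != i by move=> i; apply: ordSS_neq.
have hdist : forall i j : 'I_n, i != j -> VV a b i <> VV a b j.
  move=> i j hij e.
  have f1 := V_on1 hD i; rewrite e in f1.
  have [hij'|hij'] := eqVneq i (ordS j).
    have f2 := V_on2 hD i; rewrite e in f2.
    have : ordS i != j by rewrite hij'; apply: nSS.
    have : ordS i != ordS j by rewrite hij'; apply: nS.
    by move=> h2 h1; have := V_neg hD hk' h1 h2; rewrite f2 ltxx.
  by have := V_neg hD hk' hij hij'; rewrite f1 ltxx.
have nP : forall k : 'I_n, ord_pred k != k.
  by move=> k; have := nS (ord_pred k); rewrite ord_predK eq_sym.
have nPS : forall k : 'I_n, ord_pred k != ordS k.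
  by move=> k; have := nSS (ord_pred k); rewrite ord_predK eq_sym.
have onP : forall k, fv a b k (VV a b (ord_pred k)) = 0.
  by move=> k; have := V_on2 hD (ord_pred k); rewrite ord_predK.
have online : forall k : 'I_n, segment (VV a b (ord_pred k)) (VV a b k) `<=` line a b k.
  move=> k p [t [ht ->]]; rewrite /line /=.
  have := onP k; have := V_on1 hD k; rewrite /fv => h1 h2.
  have -> : a k * ((1 - t) * (VV a b (ord_pred k)).1 + t * (VV a b k).1) +
     b k * ((1 - t) * (VV a b (ord_pred k)).2 + t * (VV a b k).2) - 1 =
     (1 - t) * (a k * (VV a b (ord_pred k)).1 + b k * (VV a b (ord_pred k)).2 - 1)
     + t * (a k * (VV a b k).1 + b k * (VV a b k).2 - 1) by ring.
  by rewrite h1 h2 !mulr0 addr0.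
split; first exact: hdist.
split.
  move=> i; rewrite /collinear.
  have h1 := V_on2 hD (ordS i); have h2 := V_on1 hD (ordS (ordS i)).
  have h3 := V_neg hD hk' (nSS i) (nS (ordS i)).
  rewrite /fv in h1 h2 h3.
  apply: (col_alg h1 h2 _ h3).
  by rewrite -!surjective_pairing => e; apply: (hdist (ordS i) (ordS (ordS i))); [rewrite eq_sym; apply: nS|].
split; first exact: online.
split.
  rewrite closure_S interior_S //; apply/seteqP; split => p /=.
    move=> [hS hnot].
    have [k hk2] : exists k, ~ (fv a b k p < 0).
      case: (pselect (exists k, ~ (fv a b k p < 0))) => // hno; exfalso.
      apply: hnot => k; case: (pselect (fv a b k p < 0)) => // h; exfalso; apply: hno; by exists k.
    have e : fv a b k p = 0.
      apply/eqP; rewrite eq_le hS /=; rewrite leNgt; apply/negP => h.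
      by apply: hk2.
    exists k.
    have hSP : ordS k != ord_pred k by rewrite eq_sym.
    have hSS : ordS k != ordS (ord_pred k) by rewrite ord_predK; apply: nS.
    have hl' := V_neg hD hk' hSP hSS.
    have hm := V_neg hD hk' (nP k) (nPS k).
    exact: (edge_alg (hab k) (hdist _ _ (nP k)) (onP k) (V_on1 hD k) e (V_on1 hD (ord_pred k))
                     hm (hS (ord_pred k)) (V_on2 hD k) hl' (hS (ordS k))).
  move=> [k [t [ht ->]]]; split.
    move=> j.
    have h1 := V_le hD hk' (ord_pred k) j; have h2 := V_le hD hk' k j.
    rewrite /fv in h1 h2.
    have -> : a j * ((1 - t) * (VV a b (ord_pred k)).1 + t * (VV a b k).1) +
       b j * ((1 - t) * (VV a b (ord_pred k)).2 + t * (VV a b k).2) - 1 =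
       (1 - t) * (a j * (VV a b (ord_pred k)).1 + b j * (VV a b (ord_pred k)).2 - 1)
       + t * (a j * (VV a b k).1 + b j * (VV a b k).2 - 1) by ring.
    move/andP: ht => [t0 t1].
    have : 0 <= 1 - t by lra.
    nra.
  move=> hp; have := hp k.
  have := online k _ (ex_intro _ t (conj ht erefl)); rewrite /line /fv /= => ->.
  by rewrite ltxx.
split.
  apply/seteqP; split => p.
    by move=> hp; apply: S_sub_hull.
  by move=> hp; apply: (hull_sub_S hD hk').
rewrite interior_S // => k; rewrite /fv /= !mulr0 add0r sub0r; lra.
Qed.
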